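(* Let $R$ be a finite Frobenius ring, $\chi$ a generating character of $R$, $M=\{x_0=0,x_1,\ldots,x_n\}$ a finite $R$-bimodule, and $B,B'$ non-degenerate bilinear forms on $M$. Then the matrices $H=[\chi(B(x_i,x_j))]_{0\le i,j\le n}$ and $H'=[\chi(B'(x_i,x_j))]_{0\le i,j\le n}$ are equivalent by a row permutation, i.e. $H'$ is obtained from $H$ by permuting its rows.
   Context: A bilinear form on $M$ is a biadditive map $B:M\times M\to R$ with $B(rx,y)=rB(x,y)$ and $B(x,yr)=B(x,y)r$; it is non-degenerate if its left and right kernels are zero. A character of $R$ is a group homomorphism $(R,+)\to\mathbb{C}^*$; it is generating if its kernel contains no nonzero left ideal and no nonzero right ideal of $R$. *)

(* Defs.v *)
From mathcomp Require Import all_boot all_order all_algebra all_fingroup all_field.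
Set Implicit Arguments. Unset Strict Implicit. Unset Printing Implicit Defensive.
Import GRing.Theory.
Local Open Scope ring_scope.

(* A character of R: a group homomorphism (R,+) -> C^*, with C modelled by
   algC (every such character of a finite group takes root-of-unity values). *)
Definition is_character (R : finPzRingType) (chi : R -> algC) : Prop :=
  (forall a b : R, chi (a + b) = chi a * chi b) /\ (forall a : R, chi a != 0).

Definition left_ideal (R : finPzRingType) (I : {set R}) : Prop :=
  0 \in I /\ (forall x y, x \in I -> y \in I -> x - y \in I) /\
  (forall r x, x \in I -> r * x \in I).

Definition right_ideal (R : finPzRingType) (I : {set R}) : Prop :=
  0 \in I /\ (forall x y, x \in I -> y \in I -> x - y \in I) /\
  (forall r x, x \in I -> x * r \in I).

Definition generating (R : finPzRingType) (chi : R -> algC) : Prop :=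
  (forall I : {set R}, left_ideal I -> (forall x, x \in I -> chi x = 1) -> I = [set 0]) /\
  (forall I : {set R}, right_ideal I -> (forall x, x \in I -> chi x = 1) -> I = [set 0]).

(* Finite Frobenius ring, via Wood's characterization: admits a generating character. *)
Definition Frobenius (R : finPzRingType) : Prop :=
  exists chi : R -> algC, is_character chi /\ generating chi.

Definition is_bimodule (R : finPzRingType) (M : finZmodType)
  (la : R -> M -> M) (ra : M -> R -> M) : Prop :=
  ((forall r x y, la r (x + y) = la r x + la r y) /\
   (forall r s x, la (r + s) x = la r x + la s x) /\
   (forall r s x, la (r * s) x = la r (la s x)) /\
   (forall x, la 1 x = x)) /\
  ((forall r x y, ra (x + y) r = ra x r + ra y r) /\
   (forall r s x, ra x (r + s) = ra x r + ra x s) /\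
   (forall r s x, ra x (r * s) = ra (ra x r) s) /\
   (forall x, ra x 1 = x)) /\
  (forall r s x, ra (la r x) s = la r (ra x s)).

Definition is_bilinear_form (R : finPzRingType) (M : finZmodType)
  (la : R -> M -> M) (ra : M -> R -> M) (B : M -> M -> R) : Prop :=
  [/\ (forall x y z, B (x + y) z = B x z + B y z),
      (forall x y z, B x (y + z) = B x y + B x z),
      (forall r x y, B (la r x) y = r * B x y) &
      (forall r x y, B x (ra y r) = B x y * r)].

Definition nondeg_form (R : finPzRingType) (M : finZmodType) (B : M -> M -> R) : Prop :=
  (forall x, (forall y, B x y = 0) -> x = 0) /\
  (forall y, (forall x, B x y = 0) -> y = 0).

Definition char_matrix (R : finPzRingType) (M : finZmodType) (n : nat)
  (chi : R -> algC) (B : M -> M -> R) (e : 'I_n.+1 -> M) : 'M[algC]_n.+1 :=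
  \matrix_(i, j) chi (B (e i) (e j)).

(* Main.v *)
Require Import Defs.
From mathcomp Require Import all_boot all_order all_algebra all_fingroup all_field.
Set Implicit Arguments. Unset Strict Implicit. Unset Printing Implicit Defensive.
Import GRing.Theory.
Local Open Scope ring_scope.

Section Aux.
Variables (R : finPzRingType) (chi : R -> algC) (M : finZmodType).

Lemma chi0 : is_character chi -> chi 0 = 1.
Proof.
case=> hm hnz; have := hm 0 0; rewrite addr0 => h.
by apply: (mulfI (hnz 0)); rewrite mulr1 -h.
Qed.

Lemma chiB : is_character chi -> forall a b, chi (a - b) = chi a / chi b.
Proof.
move=> [hm hnz] a b; have := hm (a - b) b; rewrite subrK => ->.
by rewrite mulfK.
Qed.

Lemma char_sum (rho : M -> algC) : (forall a b, rho (a + b) = rho a * rho b) ->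
  forall y0, rho y0 != 1 -> \sum_y rho y = 0.
Proof.
move=> hm y0 hy0.
have h : \sum_y rho y = rho y0 * \sum_y rho y.
  rewrite mulr_sumr (reindex_inj (addrI y0)) /=.
  by apply: eq_bigr => y _; rewrite hm.
have : (1 - rho y0) * \sum_y rho y = 0 by rewrite mulrBl mul1r -h subrr.
move/eqP; rewrite mulf_eq0 subr_eq0 eq_sym (negbTE hy0) /=.
by move/eqP.
Qed.

Variables (la : R -> M -> M) (ra : M -> R -> M) (B : M -> M -> R).

Lemma B0l : is_bilinear_form la ra B -> forall y, B 0 y = 0.
Proof.
case=> hadd _ _ _ y; have := hadd 0 0 y; rewrite addr0 => h.
by apply: (addrI (B 0 y)); rewrite addr0 -h.
Qed.

Lemma B0r : is_bilinear_form la ra B -> forall x, B x 0 = 0.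
Proof.
case=> _ hadd _ _ y; have := hadd y 0 0; rewrite addr0 => h.
by apply: (addrI (B y 0)); rewrite addr0 -h.
Qed.

Lemma BBl : is_bilinear_form la ra B -> forall a b y, B (a - b) y = B a y - B b y.
Proof.
case=> hadd _ _ _ a b y; have := hadd (a - b) b y; rewrite subrK => ->.
by rewrite addrK.
Qed.

Lemma BBr : is_bilinear_form la ra B -> forall x a b, B x (a - b) = B x a - B x b.
Proof.
case=> _ hadd _ _ x a b; have := hadd x (a - b) b; rewrite subrK => ->.
by rewrite addrK.
Qed.

Lemma left_triv : is_character chi -> generating chi ->
  is_bilinear_form la ra B -> nondeg_form B ->
  forall y, (forall x, chi (B x y) = 1) -> y = 0.
Proof.
move=> hc [hgl hgr] hB [hnl hnr] y hy.
have hI : [set B x y | x : M] = [set 0].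
  apply: hgl; last by move=> r /imsetP [x _ ->].
  split; first by apply/imsetP; exists 0 => //; rewrite B0l.
  split.
    move=> a b /imsetP [x _ ->] /imsetP [x' _ ->].
    by apply/imsetP; exists (x - x') => //; rewrite BBl.
  move=> r a /imsetP [x _ ->]; apply/imsetP; exists (la r x) => //.
  by case: hB => _ _ -> _.
apply: hnr => x; have : B x y \in [set B x y | x : M] by apply: imset_f.
by rewrite hI inE => /eqP.
Qed.

Lemma right_triv : is_character chi -> generating chi ->
  is_bilinear_form la ra B -> nondeg_form B ->
  forall x, (forall y, chi (B x y) = 1) -> x = 0.
Proof.
move=> hc [hgl hgr] hB [hnl hnr] x hx.
have hI : [set B x y | y : M] = [set 0].
  apply: hgr; last by move=> r /imsetP [y _ ->].
  split; first by apply/imsetP; exists 0 => //; rewrite B0r.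
  split.
    move=> a b /imsetP [y _ ->] /imsetP [y' _ ->].
    by apply/imsetP; exists (y - y') => //; rewrite BBr.
  move=> r a /imsetP [y _ ->]; apply/imsetP; exists (ra y r) => //.
  by case: hB => _ _ _ ->.
apply: hnl => y; have : B x y \in [set B x y | y : M] by apply: imset_f.
by rewrite hI inE => /eqP.
Qed.

End Aux.

Theorem propositionA2 (R : finPzRingType) (chi : R -> algC)
  (M : finZmodType) (la : R -> M -> M) (ra : M -> R -> M)
  (n : nat) (e : 'I_n.+1 -> M) (B B' : M -> M -> R) :
  Frobenius R ->
  is_character chi -> generating chi ->
  is_bimodule la ra ->
  bijective e -> e ord0 = 0 ->
  is_bilinear_form la ra B -> nondeg_form B ->
  is_bilinear_form la ra B' -> nondeg_form B' ->
  exists s : 'S_(n.+1),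
    char_matrix chi B' e = row_perm s (char_matrix chi B e).
Proof.
move=> _ hc hg _ be _ hB hnB hB' hnB'.
have hc' := hc; case: hc' => hm hnz.
have hphi : forall x, exists z, [forall y, chi (B' x y) == chi (B z y)].
  move=> x; apply/existsP; case: (boolP [exists z, [forall y, chi (B' x y) == chi (B z y)]]) => // hno.
  exfalso.
  pose w y := (chi (B' x y))^-1.
  have hz : forall z, \sum_y chi (B z y) * w y = 0.
    move=> z; move: hno; rewrite negb_exists => /forallP /(_ z).
    rewrite negb_forall => /existsP [y0 hy0].
    apply: (@char_sum _ (fun y => chi (B z y) * w y) _ y0).
      move=> a b; rewrite /w; case: hB => _ h2 _ _; case: hB' => _ h2' _ _.
      by rewrite h2 h2' !hm invfM mulrACA.
    rewrite /w; apply: contra hy0 => /eqP h.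
    have : chi (B z y0) = chi (B' x y0).
      by apply: (divIf (hnz (B' x y0))); rewrite h divff.
    by move=> ->.
  have hsum : \sum_z \sum_y chi (B z y) * w y = #|M|%:R.
    rewrite exchange_big /= (bigD1 0) //= [X in _ + X]big1 => [|y hy].
      rewrite addr0 /w (B0r hB') chi0 // invr1.
      under eq_bigr => z _ do rewrite (B0r hB) chi0 // mulr1.
      by rewrite sumr_const.
    rewrite -mulr_suml.
    have : ~~ [forall z, chi (B z y) == 1].
      apply/negP => /forallP h; move/eqP: hy; apply; apply: (left_triv hc hg hB hnB) => z; exact/eqP/h.
    rewrite negb_forall => /existsP [z0 hz0].
    rewrite (char_sum (rho := fun z => chi (B z y)) _ hz0) ?mul0r //.
    by move=> a b; case: hB => -> _ _ _; rewrite hm.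
  move: hsum; rewrite big1 // => /eqP; rewrite eq_sym Num.Theory.pnatr_eq0.
  by apply/negP; rewrite -lt0n; apply/card_gt0P; exists 0.
pose phi x := xchoose (hphi x).
have hphiP : forall x y, chi (B' x y) = chi (B (phi x) y).
  by move=> x y; have /forallP /(_ y) /eqP := xchooseP (hphi x).
case: be => einv eK Ke.
pose f i := einv (phi (e i)).
have finj : injective f.
  move=> i j /(congr1 e); rewrite /f !Ke => hij.
  apply: (can_inj eK); apply/eqP; rewrite -subr_eq0; apply/eqP.
  apply: (right_triv hc hg hB' hnB') => y.
  by rewrite (BBl hB') chiB // !hphiP hij divff.
exists (perm finj); apply/matrixP => i j.
by rewrite /char_matrix !mxE permE /f Ke hphiP.
Qed.
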